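(* Let $R$ be a $\Bbbk$-algebra, $\sigma\in\operatorname{Aut}_\Bbbk(R)$, $H,J$ two-sided ideals of $R$, and $B=R(t,\sigma,H,J)$. Then: (1) $B$ is a $\mathbb Z$-graded subalgebra of $R[t,t^{-1};\sigma]$, with $B_n=I^{(n)}t^n$ in degree $n$; (2) $B$ is generated as a $\Bbbk$-algebra by $R$, $Jt=\{jt: j\in J\}$ and $\sigma^{-1}(H)t^{-1}=\{\sigma^{-1}(h)t^{-1}:h\in H\}$; (3) $B$ is a domain if and only if $R$ is a domain; (4) suppose $R$ is a domain, $\sigma$ has infinite order, and for no integer $k\neq 0$ does there exist a nonzero $a\in R$ with $ra=a\sigma^k(r)$ for all $r\in R$. Then the center of $B$ equals $Z(R)^{\langle\sigma\rangle}=\{z\in Z(R):\sigma(z)=z\}$, where $Z(R)$ is the center of $R$.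
   Context: $\Bbbk$ is a field; all algebras are associative unital $\Bbbk$-algebras. For an algebra $R$ and $\sigma\in\operatorname{Aut}_\Bbbk(R)$, $R[t,t^{-1};\sigma]$ is the skew Laurent ring: generated over $R$ by $t,t^{-1}$ with $tt^{-1}=t^{-1}t=1$ and $t^{\pm1}r=\sigma^{\pm1}(r)t^{\pm1}$ for $r\in R$. Given two-sided ideals $H,J$ of $R$, set $I^{(0)}=R$, $I^{(n)}=J\sigma(J)\cdots\sigma^{n-1}(J)$ for $n\ge1$, and $I^{(n)}=\sigma^{-1}(H)\sigma^{-2}(H)\cdots\sigma^{n}(H)$ for $n\le-1$; it is assumed throughout that $I^{(n)}\neq0$ for all $n\in\mathbb Z$. The Bell–Rogalski (BR) algebra is $R(t,\sigma,H,J)=\bigoplus_{n\in\mathbb Z}I^{(n)}t^n\subseteq R[t,t^{-1};\sigma]$. *)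

(* Defs.v *)
From HB Require Import structures.
From mathcomp Require Import all_boot all_order all_algebra.
Set Implicit Arguments. Unset Strict Implicit. Unset Printing Implicit Defensive.
Import Order.TTheory GRing.Theory Num.Theory.
Local Open Scope ring_scope.

Definition two_sided_ideal (R : nzRingType) (I : R -> Prop) : Prop :=
  I 0 /\ (forall x y, I x -> I y -> I (x + y)) /\
  (forall r x, I x -> I (r * x) /\ I (x * r)).

Definition img (A B : Type) (f : A -> B) (X : A -> Prop) : B -> Prop :=
  fun y => exists x, X x /\ y = f x.

Definition ideal_prod (R : nzRingType) (F : nat -> R -> Prop) (m : nat) : R -> Prop :=
  fun x => exists (l : nat) (w : 'I_l -> nat -> R),
    (forall j i, (i < m)%N -> F i (w j i)) /\
    x = \sum_(j < l) \prod_(i < m) w j i.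

Definition sigz (R : Type) (s sinv : R -> R) (n : int) : R -> R :=
  match n with
  | Posz m => iter m s
  | Negz m => iter m.+1 sinv
  end.

(* I^(n):  R for n = 0;  J s(J) ... s^(n-1)(J) for n >= 1;
   s^-1(H) s^-2(H) ... s^n(H) for n <= -1. *)
Definition Iseq (R : nzRingType) (s sinv : R -> R) (H J : R -> Prop) (n : int)
  : R -> Prop :=
  match n with
  | Posz 0 => fun _ => True
  | Posz m.+1 => ideal_prod (fun i => img (sigz s sinv (Posz i)) J) m.+1
  | Negz m => ideal_prod (fun i => img (sigz s sinv (Negz i)) H) m.+1
  end.

Definition tpow (S : nzRingType) (t tinv : S) (n : int) : S :=
  match n with
  | Posz m => t ^+ m
  | Negz m => tinv ^+ m.+1
  end.

Definition laurent_sum (R S : nzRingType) (iota : R -> S) (t tinv : S)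
  (m : nat) (c : int -> R) : S :=
  \sum_(i < (m.*2).+1) iota (c (i%:Z - m%:Z)) * tpow t tinv (i%:Z - m%:Z).

(* (S, iota, t) is the skew Laurent ring R[t, t^-1; sigma]: iota : R -> S is an
   injective k-algebra morphism, t is a unit with inverse tinv,
   t iota(r) = iota(sigma r) t, and every element of S is uniquely a finite
   sum  \sum_n iota(r_n) t^n  (i.e. S is free as a left R-module on the t^n). *)
Definition is_skew_laurent (k : fieldType) (R S : algType k) (sigma : R -> R)
  (iota : {lrmorphism R -> S}) (t tinv : S) : Prop :=
  injective iota /\ t * tinv = 1 /\ tinv * t = 1 /\
  (forall r, t * iota r = iota (sigma r) * t) /\
  (forall s, exists m c, s = laurent_sum iota t tinv m c) /\
  (forall m c, laurent_sum iota t tinv m c = 0 ->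
     forall n : int, (`|n| <= m)%N -> c n = 0).

Definition BR (R S : nzRingType) (s sinv : R -> R) (H J : R -> Prop)
  (iota : R -> S) (t tinv : S) : S -> Prop :=
  fun x => exists m c, x = laurent_sum iota t tinv m c /\
    forall n : int, (`|n| <= m)%N -> Iseq s sinv H J n (c n).

Definition BRdeg (R S : nzRingType) (s sinv : R -> R) (H J : R -> Prop)
  (iota : R -> S) (t tinv : S) (n : int) : S -> Prop :=
  fun x => exists r, Iseq s sinv H J n r /\ x = iota r * tpow t tinv n.

Definition is_subalg (k : fieldType) (S : algType k) (P : S -> Prop) : Prop :=
  P 1 /\ (forall x y, P x -> P y -> P (x + y)) /\
  (forall x y, P x -> P y -> P (x * y)) /\
  (forall (a : k) x, P x -> P (a *: x)).

Definition gen_subalg (k : fieldType) (S : algType k) (G : S -> Prop) : S -> Prop :=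
  fun x => forall P, is_subalg P -> (forall g, G g -> P g) -> P x.

Definition is_domain (R : nzRingType) : Prop :=
  (1 : R) != 0 /\ forall a b : R, a * b = 0 -> a = 0 \/ b = 0.

Definition is_domain_on (S : nzRingType) (P : S -> Prop) : Prop :=
  (1 : S) != 0 /\ forall a b, P a -> P b -> a * b = 0 -> a = 0 \/ b = 0.

(* Main.v *)
Require Import Defs.
From HB Require Import structures.
From mathcomp Require Import all_boot all_order all_algebra.
From mathcomp Require Import zify.
From Stdlib Require Import IndefiniteDescription Classical.
Set Implicit Arguments. Unset Strict Implicit.
Import Order.TTheory GRing.Theory Num.Theory.
Local Open Scope ring_scope.

Lemma int_ind3 (P : int -> Prop) : P 0 -> (forall n, P n -> P (n + 1)) ->
  (forall n, P n -> P (n - 1)) -> forall n, P n.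
Proof.
move=> P0 Ps Pp [n|n].
  elim: n => [//|n IH]; have := Ps _ IH; congr P; lia.
elim: n => [|n IH]; first by have := Pp _ P0; congr P.
have := Pp _ IH; congr P; rewrite !NegzE; lia.
Qed.

Section Sig.
Variables (k : fieldType) (R : algType k).
Variables (sigma : {lrmorphism R -> R}) (sigmainv : R -> R).
Hypothesis hsig1 : cancel sigma sigmainv.
Hypothesis hsig2 : cancel sigmainv sigma.

Local Notation sz := (sigz sigma sigmainv).

Lemma sigzS n x : sz (n + 1) x = sigma (sz n x).
Proof.
case: n => [n|[|n]].
- have -> : Posz n + 1 = Posz n.+1 by lia.
  by [].
- by rewrite /= hsig2.
- have -> : Negz n.+1 + 1 = Negz n by rewrite !NegzE; lia.
  by rewrite /= hsig2.
Qed.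

Lemma sigzP n x : sz (n - 1) x = sigmainv (sz n x).
Proof.
case: n => [[|n]|n].
- by [].
- have -> : Posz n.+1 - 1 = Posz n by lia.
  by rewrite /= hsig1.
- have -> : Negz n - 1 = Negz n.+1 by rewrite !NegzE; lia.
  by [].
Qed.

Lemma sigz_add m n x : sz (m + n) x = sz m (sz n x).
Proof.
elim/int_ind3: m x => [|m IH|m IH] x; first by rewrite add0r.
- by rewrite -addrAC sigzS IH sigzS.
- by rewrite -addrAC sigzP IH sigzP.
Qed.

Lemma sigz0 x : sz 0 x = x. Proof. by []. Qed.

Lemma sigz_can n x : sz (- n) (sz n x) = x.
Proof. by rewrite -sigz_add addNr. Qed.
Lemma sigz_can2 n x : sz n (sz (- n) x) = x.
Proof. by rewrite -sigz_add addrN. Qed.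

Lemma sigmainvM x y : sigmainv (x * y) = sigmainv x * sigmainv y.
Proof. by apply: (can_inj hsig1); rewrite hsig2 rmorphM; congr (_ * _); symmetry; apply: hsig2. Qed.
Lemma sigmainvD x y : sigmainv (x + y) = sigmainv x + sigmainv y.
Proof. by apply: (can_inj hsig1); rewrite hsig2 rmorphD; congr (_ + _); symmetry; apply: hsig2. Qed.
Lemma sigmainv1 : sigmainv 1 = 1.
Proof. by apply: (can_inj hsig1); rewrite rmorph1 !hsig2. Qed.
Lemma sigmainvZ (a : k) x : sigmainv (a *: x) = a *: sigmainv x.
Proof. by apply: (can_inj hsig1); rewrite hsig2 linearZ /=; congr (_ *: _); symmetry; apply: hsig2. Qed.

Lemma sigzM n x y : sz n (x * y) = sz n x * sz n y.
Proof.
elim/int_ind3: n => [//|n IH|n IH]; first by rewrite !sigzS IH rmorphM.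
by rewrite !sigzP IH sigmainvM.
Qed.
Lemma sigzD n x y : sz n (x + y) = sz n x + sz n y.
Proof.
elim/int_ind3: n => [//|n IH|n IH]; first by rewrite !sigzS IH rmorphD.
by rewrite !sigzP IH sigmainvD.
Qed.
Lemma sigz1 n : sz n 1 = 1.
Proof.
elim/int_ind3: n => [//|n IH|n IH]; first by rewrite !sigzS IH rmorph1.
by rewrite !sigzP IH sigmainv1.
Qed.
Lemma sigzZ n (a : k) x : sz n (a *: x) = a *: sz n x.
Proof.
elim/int_ind3: n => [//|n IH|n IH]; first by rewrite !sigzS IH linearZ.
by rewrite !sigzP IH sigmainvZ.
Qed.
Lemma sigzr0 n : sz n 0 = 0.
Proof. have := sigzD n 0 0; rewrite addr0 => h; apply: (addrI (sz n 0)); by rewrite addr0 -h. Qed.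
Lemma sigz_inj n : injective (sz n).
Proof. by move=> x y /(congr1 (sz (- n))); rewrite !sigz_can. Qed.
Lemma sigz_fix n z : sigma z = z -> sz n z = z.
Proof.
move=> hz; have hz' : sigmainv z = z by rewrite -{1}hz hsig1.
elim/int_ind3: n => [//|n IH|n IH]; first by rewrite sigzS IH.
by rewrite sigzP IH.
Qed.
End Sig.
Section IP.
Variable R : nzRingType.
Implicit Types (F G : nat -> R -> Prop).

Lemma IP_elim F m (P : R -> Prop) : P 0 -> (forall a b, P a -> P b -> P (a + b)) ->
  (forall w : nat -> R, (forall i, (i < m)%N -> F i (w i)) -> P (\prod_(i < m) w i)) ->
  forall x, ideal_prod F m x -> P x.
Proof.
move=> P0 PD Pw x [l [w [hw ->]]].
by apply: (big_ind P) => // j _; apply: Pw => i hi; apply: hw.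
Qed.

Lemma IP0 F m : ideal_prod F m 0.
Proof. by exists 0%N, (fun _ _ => 0); split=> [[]//|]; rewrite big_ord0. Qed.

Lemma IPD F m a b : ideal_prod F m a -> ideal_prod F m b -> ideal_prod F m (a + b).
Proof.
move=> [l1 [w1 [h1 ->]]] [l2 [w2 [h2 ->]]].
exists (l1 + l2)%N, (fun j => match split j with inl j1 => w1 j1 | inr j2 => w2 j2 end).
split.
  by move=> j i hi; case: (split j) => j'; [apply: h1|apply: h2].
rewrite big_split_ord /=; congr (_ + _); apply: eq_bigr => j _.
  by rewrite -[lshift _ _]/(unsplit (inl j)) unsplitK.
by rewrite -[rshift _ _]/(unsplit (inr j)) unsplitK.
Qed.

Lemma IP_single F m (w : nat -> R) : (forall i, (i < m)%N -> F i (w i)) ->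
  ideal_prod F m (\prod_(i < m) w i).
Proof.
move=> hw; exists 1%N, (fun _ => w); split=> [j i hi|]; first by apply: hw.
by rewrite big_ord1.
Qed.

Lemma IP_mono F G m x : (forall i y, (i < m)%N -> F i y -> G i y) ->
  ideal_prod F m x -> ideal_prod G m x.
Proof.
move=> hFG; apply: IP_elim; [exact: IP0|exact: IPD|].
by move=> w hw; apply: IP_single => i hi; apply: hFG => //; apply: hw.
Qed.

Lemma IP_cat F G m n a b : ideal_prod F m a -> ideal_prod G n b ->
  ideal_prod (fun i => if (i < m)%N then F i else G (i - m)%N) (m + n) (a * b).
Proof.
move=> ha hb; move: a ha b hb.
apply: IP_elim => [b _|a1 a2 h1 h2 b hb|wa hwa].
- by rewrite mul0r; apply: IP0.
- by rewrite mulrDl; apply: IPD; [apply: h1|apply: h2].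
apply: IP_elim => [|b1 b2 h1 h2|wb hwb]; first by rewrite mulr0; apply: IP0.
  by rewrite mulrDr; apply: IPD.
have -> : \prod_(i < m) wa i * \prod_(i < n) wb i =
   \prod_(i < m + n) (if (i < m)%N then wa i else wb (i - m)%N).
  rewrite big_split_ord /=; congr (_ * _); apply: eq_bigr => i _ /=.
    by rewrite ltn_ord.
  by rewrite ltnNge leq_addr /= addKn.
apply: (@IP_single _ _ (fun i : nat => if (i < m)%N then wa i else wb (i - m)%N)) => i hi /=.
case: ifP => him; first by apply: hwa.
by apply: hwb; lia.
Qed.

Lemma IP_map F m (f : R -> R) x :
  f 0 = 0 -> f 1 = 1 -> (forall a b, f (a + b) = f a + f b) ->
  (forall a b, f (a * b) = f a * f b) ->
  ideal_prod F m x -> ideal_prod (fun i y => exists z, F i z /\ y = f z) m (f x).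
Proof.
move=> f0 f1 fD fM; move: x; apply: IP_elim.
- by rewrite f0; apply: IP0.
- by move=> a b ha hb; rewrite fD; apply: IPD.
move=> w hw; rewrite (big_morph f fM f1); apply: (@IP_single _ _ (fun i => f (w i))) => i hi.
by exists (w i); split => //; apply: hw.
Qed.

Lemma IP_truncR F m K x r : (0 < K)%N -> (K <= m)%N ->
  (forall y s, F K.-1 y -> F K.-1 (y * s)) ->
  ideal_prod F m x -> ideal_prod F K (x * r).
Proof.
case: K => // K _ hKm hF; move: x; apply: IP_elim.
- by rewrite mul0r; apply: IP0.
- by move=> a b ha hb; rewrite mulrDl; apply: IPD.
move=> w hw.
pose u i := if (i < K)%N then w i else (\prod_(K <= j < m) w j) * r.
have -> : \prod_(i < m) w i * r = \prod_(i < K.+1) u i.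
  rewrite -!(big_mkord xpredT) (big_cat_nat (n:=K)) //; last by lia.
  rewrite big_nat_recr //= -mulrA; congr (_ * _).
    by apply: eq_big_nat => i /andP [_ hi]; rewrite /u hi.
  by rewrite /u ltnn.
apply: (@IP_single _ _ u) => i hi; rewrite /u /=; case: ifP => hiK; first by apply: hw; lia.
have -> : i = K by lia.
rewrite big_ltn; last by lia.
by rewrite -mulrA; apply: (hF (w K)); apply: hw; lia.
Qed.

Lemma IP_truncL F m K x r : (0 < K)%N -> (K <= m)%N ->
  (forall y s, F (m - K)%N y -> F (m - K)%N (s * y)) ->
  ideal_prod F m x -> ideal_prod (fun i => F (i + (m - K))%N) K (r * x).
Proof.
case: K => // K _ hKm hF; move: x; apply: IP_elim.
- by rewrite mulr0; apply: IP0.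
- by move=> a b ha hb; rewrite mulrDr; apply: IPD.
move=> w hw; set d := (m - K.+1)%N.
pose u i := if i == 0%N then r * (\prod_(0 <= j < d.+1) w j) else w (i + d)%N.
have -> : r * \prod_(i < m) w i = \prod_(i < K.+1) u i.
  rewrite -!(big_mkord xpredT) [in RHS]big_ltn //.
  rewrite [in LHS](big_cat_nat (n:=d.+1)) //; last by lia.
  rewrite mulrA; congr (_ * _).
  rewrite -(add1n d) big_addn.
  have -> : (m - d = K.+1)%N by lia.
  by apply: eq_big_nat => i /andP [hi _]; rewrite /u; case: i hi.
apply: (@IP_single _ _ u) => i hi; rewrite /u /=; case: eqP => [->|_]; last by apply: hw; lia.
rewrite big_nat_recr //= mulrA; apply: hF; apply: hw; lia.
Qed.

End IP.
Section Iseq.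
Variables (k : fieldType) (R : algType k).
Variables (sigma : {lrmorphism R -> R}) (sigmainv : R -> R).
Hypothesis hsig1 : cancel sigma sigmainv.
Hypothesis hsig2 : cancel sigmainv sigma.
Variables (H J : R -> Prop).
Hypothesis hH : two_sided_ideal H.
Hypothesis hJ : two_sided_ideal J.
Local Notation sz := (sigz sigma sigmainv).
Local Notation Is := (Iseq sigma sigmainv H J).

Lemma IP_mono' F G M M' (x : R) : ideal_prod F M x -> M = M' ->
  (forall i y, (i < M)%N -> F i y -> G i y) -> ideal_prod G M' x.
Proof. by move=> h <- hFG; apply: IP_mono h. Qed.

Lemma img_idealR X e y s : two_sided_ideal X -> img (sz e) X y -> img (sz e) X (y * s).
Proof.
move=> [_ [_ hX]] [x [hx ->]]; exists (x * sz (- e) s); split; first by apply: (hX _ _ hx).2.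
by rewrite sigzM // sigz_can2.
Qed.
Lemma img_idealL X e y s : two_sided_ideal X -> img (sz e) X y -> img (sz e) X (s * y).
Proof.
move=> [_ [_ hX]] [x [hx ->]]; exists (sz (- e) s * x); split; first by apply: (hX _ _ hx).1.
by rewrite sigzM // sigz_can2.
Qed.

Lemma IPs_sig X (e : nat -> int) M kk x :
  ideal_prod (fun i => img (sz (e i)) X) M x ->
  ideal_prod (fun i => img (sz (kk + e i)) X) M (sz kk x).
Proof.
move=> h; have := IP_map (f := sz kk) (sigzr0 hsig1 hsig2 kk) (sigz1 hsig1 hsig2 kk)
  (sigzD hsig1 hsig2 kk) (sigzM hsig1 hsig2 kk) h.
apply: IP_mono => i y _ [z [[x' [hx' ->]] ->]].
by exists x'; split => //; rewrite sigz_add.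
Qed.

Lemma Iseq0 n : Is n 0.
Proof. by case: n => [[|p]|p] //=; apply: IP0. Qed.

Lemma IseqD n a b : Is n a -> Is n b -> Is n (a + b).
Proof. by case: n => [[|p]|p] //=; apply: IPD. Qed.

Lemma IseqR n a s : Is n a -> Is n (a * s).
Proof.
case: n => [[|p]|p] // h.
  apply: (IP_truncR (K := p.+1)) h => // y r hy.
  exact: (img_idealR (e := Posz p) r hJ hy).
apply: (IP_truncR (K := p.+1)) h => // y r hy.
exact: (img_idealR (e := Negz p) r hH hy).
Qed.

Lemma IseqL n a s : Is n a -> Is n (s * a).
Proof.
case: n => [[|p]|p] //= h.
- have := IP_truncL (K := p.+1) s (ltn0Sn p) (leqnn _) _ h.
  rewrite subnn; move=> /(_ (fun y r => img_idealL (e := Posz 0) r hJ)) h2.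
  by apply: IP_mono h2 => i y _; rewrite addn0.
- have := IP_truncL (K := p.+1) s (ltn0Sn p) (leqnn _) _ h.
  rewrite subnn; move=> /(_ (fun y r => img_idealL (e := Negz 0) r hH)) h2.
  by apply: IP_mono h2 => i y _; rewrite addn0.
Qed.


Lemma img_eq X e e' y : e = e' -> img (sz e) X y -> img (sz e') X y.
Proof. by move->. Qed.

Lemma IseqM m n a b : Is m a -> Is n b -> Is (m + n) (a * sz m b).
Proof.
case: m => [[|p]|p] ha hb.
- by rewrite add0r; apply: IseqL.
- case: n hb => [[|q]|q] hb.
  + by rewrite addr0; apply: IseqR.
  + have hb' := IPs_sig (X := J) (e := fun i : nat => Posz i) (M := q.+1) (Posz p.+1) hb.
    have hc := IP_cat ha hb'.
    have -> : Posz p.+1 + Posz q.+1 = Posz (p + q.+1).+1 by lia.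
    apply: (IP_mono' hc); first by lia.
    move=> i y hi; case: ifP => hip //; apply: img_eq; lia.
  + have hb' := IPs_sig (X := H) (e := fun i : nat => Negz i) (M := q.+1) (Posz p.+1) hb.
    case: (ltngtP q p) => hqp.
    * have -> : Posz p.+1 + Negz q = Posz (p - q.+1).+1 by rewrite NegzE; lia.
      apply: (IP_truncR (K := (p - q.+1).+1)) ha => //; first by lia.
      move=> y s hy; exact: (img_idealR (e := Posz (p - q.+1)) s hJ hy).
    * have -> : Posz p.+1 + Negz q = Negz (q - p.+1) by rewrite !NegzE; lia.
      have := IP_truncL (K := (q - p.+1).+1) a (ltn0Sn _) _ _ hb'.
      move=> /(_ ltac:(lia)) /(_ (fun y s => img_idealL (e := Posz p.+1 + Negz (q.+1 - (q - p.+1).+1)) s hH)) hc.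
      apply: (IP_mono' hc) => // i y hi; apply: img_eq; rewrite !NegzE; lia.
    * have -> : Posz p.+1 + Negz q = 0 by rewrite NegzE; lia.
      by [].
- case: n hb => [[|q]|q] hb.
  + by rewrite addr0; apply: IseqR.
  + have hb' := IPs_sig (X := J) (e := fun i : nat => Posz i) (M := q.+1) (Negz p) hb.
    case: (ltngtP q p) => hqp.
    * have -> : Negz p + Posz q.+1 = Negz (p - q.+1) by rewrite !NegzE; lia.
      apply: (IP_truncR (K := (p - q.+1).+1)) ha => //; first by lia.
      move=> y s hy; exact: (img_idealR (e := Negz (p - q.+1)) s hH hy).
    * have -> : Negz p + Posz q.+1 = Posz (q - p.+1).+1 by rewrite NegzE; lia.
      have := IP_truncL (K := (q - p.+1).+1) a (ltn0Sn _) _ _ hb'.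
      move=> /(_ ltac:(lia)) /(_ (fun y s => img_idealL (e := Negz p + Posz (q.+1 - (q - p.+1).+1)) s hJ)) hc.
      apply: (IP_mono' hc) => // i y hi; apply: img_eq; rewrite !NegzE; lia.
    * have -> : Negz p + Posz q.+1 = 0 by rewrite NegzE; lia.
      by [].
  + have hb' := IPs_sig (X := H) (e := fun i : nat => Negz i) (M := q.+1) (Negz p) hb.
    have hc := IP_cat ha hb'.
    have -> : Negz p + Negz q = Negz (p + q).+1 by rewrite !NegzE; lia.
    apply: (IP_mono' hc); first by lia.
    move=> i y hi; case: ifP => hip //; apply: img_eq; rewrite !NegzE; lia.
Qed.

End Iseq.
Section Laurent.
Variables (k : fieldType) (R : algType k).
Variables (sigma : {lrmorphism R -> R}) (sigmainv : R -> R).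
Hypothesis hsig1 : cancel sigma sigmainv.
Hypothesis hsig2 : cancel sigmainv sigma.
Variables (S : algType k) (io : {lrmorphism R -> S}) (t tinv : S).
Hypothesis hS : is_skew_laurent sigma io t tinv.
Local Notation sz := (sigz sigma sigmainv).
Local Notation T := (tpow t tinv).

Lemma io_inj : injective io. Proof. by case: hS. Qed.
Lemma htt : t * tinv = 1. Proof. by case: hS => _ []. Qed.
Lemma htt' : tinv * t = 1. Proof. by case: hS => _ [_ []]. Qed.
Lemma hti r : t * io r = io (sigma r) * t. Proof. by case: hS => _ [_ [_ []]]. Qed.

Lemma tpowS n : T (n + 1) = t * T n.
Proof.
case: n => [n|[|n]].
- have -> : Posz n + 1 = Posz n.+1 by lia.
  by rewrite /= exprS.
- by rewrite /= subnn expr0 htt.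
- have -> : Negz n.+1 + 1 = Negz n by rewrite !NegzE; lia.
  by rewrite /= [tinv ^+ n.+2]exprS mulrA htt mul1r.
Qed.

Lemma tpowP n : T (n - 1) = tinv * T n.
Proof.
case: n => [[|n]|n].
- by rewrite /= expr1 mulr1.
- have -> : Posz n.+1 - 1 = Posz n by lia.
  by rewrite /= exprS mulrA htt' mul1r.
- have -> : Negz n - 1 = Negz n.+1 by rewrite !NegzE; lia.
  by rewrite /= [tinv ^+ n.+2]exprS.
Qed.

Lemma tpow0 : T 0 = 1. Proof. by []. Qed.

Lemma tpow_add m n : T (m + n) = T m * T n.
Proof.
elim/int_ind3: m => [|m IH|m IH]; first by rewrite add0r mul1r.
- by rewrite -addrAC !tpowS IH mulrA.
- by rewrite -addrAC !tpowP IH mulrA.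
Qed.

Lemma tinv_io r : tinv * io r = io (sigmainv r) * tinv.
Proof.
have h := hti (sigmainv r); rewrite hsig2 in h.
rewrite -[io (sigmainv r)]mul1r -htt' -(mulrA tinv t) h !mulrA -(mulrA _ t tinv) htt.
by rewrite mulr1.
Qed.

Lemma T_io n r : T n * io r = io (sz n r) * T n.
Proof.
elim/int_ind3: n r => [|n IH|n IH] r; first by rewrite mul1r mulr1.
- by rewrite tpowS -mulrA IH !mulrA hti sigzS.
- by rewrite tpowP -mulrA IH !mulrA tinv_io sigzP.
Qed.

Lemma mono_mul a b m n : io a * T m * (io b * T n) = io (a * sz m b) * T (m + n).
Proof. by rewrite mulrA -(mulrA (io a)) T_io mulrA -rmorphM -mulrA -tpow_add. Qed.

Definition W (m : nat) : seq int := [seq (i%:Z - m%:Z) | i <- index_iota 0 (m.*2).+1].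
Definition L (m : nat) (c : int -> R) : S := \sum_(n <- W m) io (c n) * T n.
Definition mask (m : nat) (c : int -> R) (n : int) : R := if (`|n| <= m)%N then c n else 0.

Lemma memW m n : (n \in W m) = (`|n| <= m)%N.
Proof.
apply/mapP/idP => [[i] |hn].
  by rewrite mem_index_iota => /andP [_ hi] ->; lia.
exists (absz (n + m%:Z)); last by lia.
rewrite mem_index_iota; lia.
Qed.

Lemma uniqW m : uniq (W m).
Proof.
rewrite map_inj_uniq ?iota_uniq // => i j /eqP; rewrite (inj_eq (addIr _)) => /eqP [].
done.
Qed.

Lemma laurentE m c : laurent_sum io t tinv m c = L m c.
Proof. by rewrite /L /W big_map big_mkord. Qed.

Lemma L_add m c d : L m c + L m d = L m (fun n => c n + d n).
Proof. by rewrite /L -big_split; apply: eq_bigr => n _; rewrite rmorphD mulrDl. Qed.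
Lemma L_opp m c : - L m c = L m (fun n => - c n).
Proof. by rewrite /L -sumrN; apply: eq_bigr => n _; rewrite rmorphN mulNr. Qed.
Lemma L_zero m : L m (fun _ => 0) = 0.
Proof. by rewrite /L big1 // => n _; rewrite rmorph0 mul0r. Qed.

Lemma L_ext m c d : (forall n, (`|n| <= m)%N -> c n = d n) -> L m c = L m d.
Proof. by move=> h; apply: eq_big_seq => n; rewrite memW => /h ->. Qed.

Lemma L_widen m m' c : (m <= m')%N -> L m c = L m' (mask m c).
Proof.
move=> hm; rewrite /L.
have -> : \sum_(n <- W m') io (mask m c n) * T n =
          \sum_(n <- W m' | n \in W m) io (c n) * T n.
  rewrite [in RHS]big_mkcond; apply: eq_bigr => n _; rewrite /mask memW.
  by case: ifP => //; rewrite rmorph0 mul0r.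
rewrite -[in RHS]big_filter; apply: perm_big; apply: uniq_perm.
- exact: uniqW.
- by rewrite filter_uniq // uniqW.
move=> n; rewrite mem_filter !memW; apply/idP/andP => [h|[]//]; split=> //; lia.
Qed.

Lemma L_uniq m c : L m c = 0 -> forall n, (`|n| <= m)%N -> c n = 0.
Proof. by case: hS => _ [_ [_ [_ [_ hu]]]] h; apply: hu; rewrite laurentE. Qed.

Let hex := proj1 (proj2 (proj2 (proj2 (proj2 hS)))).
Definition bnd (x : S) : nat :=
  proj1_sig (constructive_indefinite_description _ (hex x)).
Definition cf (x : S) : int -> R :=
  proj1_sig (constructive_indefinite_description _
    (proj2_sig (constructive_indefinite_description _ (hex x)))).
Lemma cfP x : x = L (bnd x) (cf x).
Proof.
rewrite /cf /bnd -laurentE.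
by case: (constructive_indefinite_description _ (hex x)) => m /= hm;
  case: (constructive_indefinite_description _ hm).
Qed.

Definition coef x n := mask (bnd x) (cf x) n.

Lemma coef_L m c n : coef (L m c) n = mask m c n.
Proof.
set x := L m c; set M := maxn m (bnd x).
have e1 : x = L M (mask m c) by apply: L_widen; apply: leq_maxl.
have e2 : x = L M (mask (bnd x) (cf x)).
  by rewrite {1}(cfP x); apply: L_widen; apply: leq_maxr.
have h0 : L M (mask m c) + - L M (mask (bnd x) (cf x)) = 0 by rewrite -e1 -e2 subrr.
rewrite L_opp L_add in h0; have hu := L_uniq h0.
rewrite /coef; case: (leqP `|n| M) => hn.
  by apply/eqP; rewrite eq_sym -subr_eq0; apply/eqP; apply: hu.
rewrite /mask; case: ifP => h1; first by lia.
by case: ifP => h2 //; lia.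
Qed.

Lemma coef_of x m c n : x = L m c -> (forall n, (m < `|n|)%N -> c n = 0) -> coef x n = c n.
Proof.
move=> -> hc; rewrite coef_L /mask; case: ifP => // h; rewrite hc //; lia.
Qed.

Lemma coef_out x n : (bnd x < `|n|)%N -> coef x n = 0.
Proof. by move=> h; rewrite /coef /mask; case: ifP => //; lia. Qed.

Lemma coef_expand x : x = L (bnd x) (coef x).
Proof. by rewrite {1}(cfP x); apply: L_ext => n hn; rewrite /coef /mask hn. Qed.

Lemma coef_expand' x m : (bnd x <= m)%N -> x = L m (coef x).
Proof.
move=> h; rewrite {1}(coef_expand x) (L_widen _ h); apply: L_ext => n _.
by rewrite /mask; case: ifP => // h1; rewrite coef_out //; lia.
Qed.

Lemma coef_eq x y : (forall n, coef x n = coef y n) -> x = y.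
Proof.
move=> h; rewrite [LHS](coef_expand' (leq_maxl (bnd x) (bnd y))) [RHS](coef_expand' (leq_maxr (bnd x) (bnd y))).
by apply: L_ext => n _; apply: h.
Qed.

Lemma coefD x y n : coef (x + y) n = coef x n + coef y n.
Proof.
set M := maxn (bnd x) (bnd y).
apply: (coef_of (m := M) (c := fun n => coef x n + coef y n)).
  have ex := coef_expand' (leq_maxl (bnd x) (bnd y)).
  have ey := coef_expand' (leq_maxr (bnd x) (bnd y)).
  by rewrite -L_add -ex -ey.
by move=> j hj; rewrite !coef_out ?addr0 //; lia.
Qed.

Lemma coef0 n : coef 0 n = 0.
Proof. by apply: (coef_of (m := 0) (c := fun _ => 0)) => //; rewrite L_zero. Qed.

Lemma coef_sum (I : Type) (s : seq I) (f : I -> S) n :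
  coef (\sum_(i <- s) f i) n = \sum_(i <- s) coef (f i) n.
Proof.
elim: s => [|a s IH]; first by rewrite !big_nil coef0.
by rewrite !big_cons coefD IH.
Qed.

Lemma mono_L r d : io r * T d = L `|d|%N (fun n => if n == d then r else 0).
Proof.
rewrite /L (bigD1_seq d) ?uniqW ?memW //= eqxx big1 ?addr0 // => i hi.
by rewrite (negbTE hi) rmorph0 mul0r.
Qed.

Lemma coef_mono r d n : coef (io r * T d) n = if n == d then r else 0.
Proof.
rewrite (coef_of n (mono_L r d)) //= => j hj; case: eqP => // e; rewrite e in hj; lia.
Qed.

Lemma coefZ (a : k) x n : coef (a *: x) n = a *: coef x n.
Proof.
apply: (coef_of (m := bnd x) (c := fun n => a *: coef x n)); last by move=> j hj; rewrite coef_out ?scaler0.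
rewrite {1}(coef_expand x) /L scaler_sumr; apply: eq_bigr => j _.
by rewrite scalerAl linearZ.
Qed.

Lemma coef_mulL r x n : coef (io r * x) n = r * coef x n.
Proof.
apply: (coef_of (m := bnd x) (c := fun n => r * coef x n)); last by move=> j hj; rewrite coef_out ?mulr0.
rewrite {1}(coef_expand x) /L mulr_sumr; apply: eq_bigr => j _.
by rewrite mulrA rmorphM.
Qed.

Lemma coef_mulR x r n : coef (x * io r) n = coef x n * sz n r.
Proof.
apply: (coef_of (m := bnd x) (c := fun n => coef x n * sz n r)); last by move=> j hj; rewrite coef_out ?mul0r.
rewrite {1}(coef_expand x) /L mulr_suml; apply: eq_bigr => j _.
by rewrite -mulrA T_io mulrA rmorphM.
Qed.

Variables (H J : R -> Prop).
Hypothesis hH : two_sided_ideal H.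
Hypothesis hJ : two_sided_ideal J.
Local Notation Is := (Iseq sigma sigmainv H J).
Local Notation B := (BR sigma sigmainv H J io t tinv).
Local Notation Bn := (BRdeg sigma sigmainv H J io t tinv).

Lemma B_iff x : B x <-> forall n, Is n (coef x n).
Proof.
split.
  move=> [m [c [hx hc]]] n; rewrite laurentE in hx.
  rewrite hx coef_L /mask; case: ifP => h; first by apply: hc.
  exact: Iseq0.
move=> h; exists (bnd x), (coef x); split; last by move=> n _; apply: h.
by rewrite laurentE -coef_expand.
Qed.

Lemma Bn_B n x : Bn n x -> B x.
Proof.
move=> [r [hr ->]]; apply/B_iff => j; rewrite coef_mono.
case: eqP => [->//|_]; exact: Iseq0.
Qed.

Lemma B0 : B 0.
Proof. by apply/B_iff => n; rewrite coef0; apply: Iseq0. Qed.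

Lemma B1 : B 1.
Proof.
apply: (Bn_B (n := 0)); exists 1; split => //.
by rewrite rmorph1 mulr1.
Qed.

Lemma BD x y : B x -> B y -> B (x + y).
Proof. by move=> /B_iff hx /B_iff hy; apply/B_iff => n; rewrite coefD; apply: IseqD. Qed.

Lemma BZ (a : k) x : B x -> B (a *: x).
Proof.
move=> /B_iff hx; apply/B_iff => n; rewrite coefZ -mulr_algl; exact: IseqL.
Qed.

Lemma B_sum (I : Type) (s : seq I) (f : I -> S) : (forall i, B (f i)) -> B (\sum_(i <- s) f i).
Proof. by move=> h; apply: (big_ind B) => //; [exact: B0|exact: BD]. Qed.

Lemma Bn_mul m n x y : Bn m x -> Bn n y -> Bn (m + n) (x * y).
Proof.
move=> [a [ha ->]] [b [hb ->]]; exists (a * sz m b); split; last exact: mono_mul.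
exact: IseqM.
Qed.

Lemma BM x y : B x -> B y -> B (x * y).
Proof.
move=> /B_iff hx /B_iff hy.
rewrite (coef_expand x) (coef_expand y) /L mulr_suml; apply: B_sum => n.
rewrite mulr_sumr; apply: B_sum => j.
apply: (Bn_B (n := n + j)); apply: Bn_mul; [exists (coef x n)|exists (coef y j)]; by split.
Qed.

Lemma B_subalg : is_subalg B.
Proof. by split; [exact: B1|split; [exact: BD|split; [exact: BM|exact: BZ]]]. Qed.

Lemma B_decomp x : B x -> exists (m : nat) (b : int -> S),
       (forall n, Bn n (b n)) /\ x = \sum_(i < (m.*2).+1) b (i%:Z - m%:Z).
Proof.
move=> /B_iff hx; exists (bnd x), (fun n => io (coef x n) * T n); split.
  by move=> n; exists (coef x n).
by rewrite {1}(coef_expand x) -laurentE.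
Qed.

Lemma Bn_uniq (m : nat) (b : int -> S) : (forall n, Bn n (b n)) ->
       \sum_(i < (m.*2).+1) b (i%:Z - m%:Z) = 0 ->
       forall n : int, (`|n| <= m)%N -> b n = 0.
Proof.
move=> hb hs.
have hb' : forall n, b n = io (coef (b n) n) * T n.
  move=> n; case: (hb n) => r [_ e]; by rewrite {2}e coef_mono eqxx.
have : L m (fun n => coef (b n) n) = 0.
  rewrite -laurentE -hs; apply: eq_bigr => i _; by rewrite -hb'.
move=> /L_uniq hu n hn; rewrite hb' hu // rmorph0 mul0r //.
Qed.

Lemma Bn_of n r : B (io r * T n) -> Bn n (io r * T n).
Proof.
move=> /B_iff h; exists r; split => //; have := h n; by rewrite coef_mono eqxx.
Qed.

Definition Gset (g : S) : Prop := (exists r, g = io r) \/ (exists j, J j /\ g = io j * t) \/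
                          (exists h, H h /\ g = io (sigmainv h) * tinv).

Lemma subalg0 (P : S -> Prop) : is_subalg P -> P 0.
Proof. by move=> [h1 [_ [_ hZ]]]; rewrite -(scale0r 1); apply: hZ. Qed.

Lemma subalg_sum (P : S -> Prop) (I : Type) (s : seq I) (f : I -> S) :
  is_subalg P -> (forall i, P (f i)) -> P (\sum_(i <- s) f i).
Proof.
move=> hP h; apply: (big_ind P) => //; first exact: subalg0.
by case: hP => _ [hD _].
Qed.

Lemma tinvX_io q y : tinv ^+ q * io y = io (iter q sigmainv y) * tinv ^+ q.
Proof.
elim: q y => [|q IH] y; first by rewrite !expr0 mul1r mulr1.
by rewrite exprS -mulrA IH mulrA tinv_io -mulrA -exprS.
Qed.

Lemma gen_pos (P : S -> Prop) q (w : nat -> R) : is_subalg P -> (forall g, Gset g -> P g) ->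
  (forall i, (i < q)%N -> exists j, J j /\ w i = sz (Posz i) j) ->
  P (io (\prod_(i < q) w i) * t ^+ q).
Proof.
move=> hP hG; case: (hP) => h1 [hD [hM hZ]].
elim: q => [|q IH] hw; first by rewrite big_ord0 rmorph1 expr0 mulr1.
rewrite big_ord_recr /=; case: (hw q (ltnSn q)) => j [hj ->].
have -> : io (\prod_(i < q) w i * sz (Posz q) j) * t ^+ q.+1 =
   io (\prod_(i < q) w i) * T (Posz q) * (io j * T 1).
  by rewrite mono_mul tpowS /= exprS.
apply: hM; first by apply: IH => i hi; apply: hw; lia.
by apply: hG; right; left; exists j; rewrite /= expr1.
Qed.

Lemma gen_neg (P : S -> Prop) q (w : nat -> R) : is_subalg P -> (forall g, Gset g -> P g) ->
  (forall i, (i < q)%N -> exists h, H h /\ w i = sz (Negz i) h) ->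
  P (io (\prod_(i < q) w i) * tinv ^+ q).
Proof.
move=> hP hG; case: (hP) => h1 [hD [hM hZ]].
elim: q => [|q IH] hw; first by rewrite big_ord0 rmorph1 expr0 mulr1.
rewrite big_ord_recr /=; case: (hw q (ltnSn q)) => h [hh ->].
have -> : io (\prod_(i < q) w i * sz (Negz q) h) * tinv ^+ q.+1 =
   io (\prod_(i < q) w i) * tinv ^+ q * (io (sigmainv h) * tinv).
  rewrite [RHS]mulrA -[X in X * tinv](mulrA (io _)) tinvX_io mulrA -rmorphM -mulrA -exprSr.
  by rewrite /= -iterSr.
apply: hM; first by apply: IH => i hi; apply: hw; lia.
by apply: hG; right; right; exists h.
Qed.

Lemma gen_term (P : S -> Prop) n c : is_subalg P -> (forall g, Gset g -> P g) ->
  Is n c -> P (io c * T n).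
Proof.
move=> hP hG; case: (hP) => h1 [hD [hM hZ]].
case: n => [[|p]|p] h.
- by rewrite /= expr0 mulr1; apply: hG; left; exists c.
- apply: (IP_elim (P := fun c => P (io c * T (Posz p.+1))) _ _ _ h).
  + by rewrite rmorph0 mul0r; apply: subalg0.
  + by move=> a b ha hb; rewrite rmorphD mulrDl; apply: hD.
  + by move=> w hw; apply: (gen_pos (w := w)) => // i hi; apply: hw.
- apply: (IP_elim (P := fun c => P (io c * T (Negz p))) _ _ _ h).
  + by rewrite rmorph0 mul0r; apply: subalg0.
  + by move=> a b ha hb; rewrite rmorphD mulrDl; apply: hD.
  + by move=> w hw; apply: (gen_neg (w := w)) => // i hi; apply: hw.
Qed.

Lemma gen_B x : B x <-> gen_subalg Gset x.
Proof.
split.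
  move=> /B_iff hx P hP hG; rewrite (coef_expand x) /L; apply: subalg_sum => // n.
  exact: gen_term.
move=> h; apply: h; first exact: B_subalg.
move=> g [[r ->]|[[j [hj ->]]|[h0 [hh ->]]]].
- apply: (Bn_B (n := 0)); exists r; split => //; by rewrite /= expr0 mulr1.
- apply: (Bn_B (n := 1)); exists j; split; last by rewrite /= expr1.
  have := IP_single (F := fun i => img (sz (Posz i)) J) (m := 1) (w := fun _ : nat => j).
  rewrite big_ord1; apply => -[|i] // _; by exists j.
- apply: (Bn_B (n := Negz 0)); exists (sigmainv h0); split; last by rewrite /= expr1.
  have := IP_single (F := fun i => img (sz (Negz i)) H) (m := 1) (w := fun _ : nat => sigmainv h0).
  rewrite big_ord1; apply => -[|i] // _; by exists h0.
Qed.

Lemma coef_in x n : coef x n != 0 -> (`|n| <= bnd x)%N.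
Proof. by move=> h; case: leqP => // hn; rewrite coef_out ?eqxx in h. Qed.

Lemma top x : x != 0 -> exists d, coef x d != 0 /\ forall n, d < n -> coef x n = 0.
Proof.
move=> hx.
have [n0 hn0] : exists n, coef x n != 0.
  apply: NNPP => hno; move/eqP: hx; apply; apply: coef_eq => n; rewrite coef0.
  by apply/eqP; apply: NNPP => hne; apply: hno; exists n; apply/negP.
have : (absz ((bnd x)%:Z - n0) <= absz ((bnd x)%:Z - n0))%N by [].
move: {2}(absz _) => K; elim: K n0 hn0 => [|K IH] n0 hn0 hK.
  exists n0; split => // n hn; apply/eqP; apply: NNPP => hne.
  have := coef_in (introT negP hne); have := coef_in hn0; lia.
case: (classic (exists n, n0 < n /\ coef x n != 0)) => [[n1 [h1 h2]]|hno].
  apply: (IH n1 h2); have := coef_in h2; have := coef_in hn0; lia.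
exists n0; split => // n hn; apply/eqP; apply: NNPP => hne.
by apply: hno; exists n; split => //; apply/negP.
Qed.

Lemma sum_delta (V : nmodType) (s : seq int) a (v : V) : uniq s -> a \in s ->
  \sum_(j <- s) (if j == a then v else 0) = v.
Proof.
move=> hs ha; rewrite (bigD1_seq a) //= eqxx big1 ?addr0 // => i hi.
by rewrite (negbTE hi).
Qed.

Lemma coef_top x y dx dy : coef x dx != 0 -> coef y dy != 0 ->
  (forall n, dx < n -> coef x n = 0) -> (forall n, dy < n -> coef y n = 0) ->
  coef (x * y) (dx + dy) = coef x dx * sz dx (coef y dy).
Proof.
move=> hx hy hxt hyt; set M := maxn (bnd x) (bnd y).
have -> : x * y = \sum_(n <- W M) \sum_(j <- W M) io (coef x n * sz n (coef y j)) * T (n + j).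
  have ex := coef_expand' (leq_maxl (bnd x) (bnd y)).
  have ey := coef_expand' (leq_maxr (bnd x) (bnd y)).
  transitivity (L M (coef x) * L M (coef y)); first by rewrite -ex -ey.
  rewrite /L mulr_suml; apply: eq_bigr => n _; rewrite mulr_sumr; apply: eq_bigr => j _.
  exact: mono_mul.
rewrite coef_sum (eq_bigr (fun n => if n == dx then coef x dx * sz dx (coef y dy) else 0)).
  rewrite sum_delta ?uniqW // memW; apply: leq_trans (coef_in hx) (leq_maxl _ _).
move=> n _; rewrite coef_sum.
rewrite (eq_bigr (fun j => if (n == dx) && (j == dy) then coef x dx * sz dx (coef y dy) else 0)).
  case: (n =P dx) => hn /=; last by rewrite big1.
  rewrite sum_delta ?uniqW // memW; apply: leq_trans (coef_in hy) (leq_maxr _ _).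
move=> j _; rewrite coef_mono.
case: (n =P dx) => [->|hn]; case: (j =P dy) => [->|hj] /=.
- by rewrite eqxx.
- by case: eqP => // e; exfalso; apply: hj; lia.
- case: eqP => // e; case: (ltP dx n) => h; first by rewrite hxt // mul0r.
  by exfalso; apply: hn; lia.
- case: eqP => // e; case: (ltP dx n) => h; first by rewrite hxt // mul0r.
  by rewrite (hyt j) ?(sigzr0 hsig1 hsig2) ?mulr0 //; lia.
Qed.

Lemma S_domain : is_domain R -> forall a b : S, a * b = 0 -> a = 0 \/ b = 0.
Proof.
move=> [_ hR] a b hab; case: (a =P 0) => ha; first by left.
case: (b =P 0) => hb; first by right.
exfalso; have [da [hda hta]] := top (introN eqP ha).
have [db [hdb htb]] := top (introN eqP hb).
have := coef_top hda hdb hta htb; rewrite hab coef0 => /esym /hR [h|h].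
  by rewrite h eqxx in hda.
move: h; rewrite -(sigzr0 hsig1 hsig2 da) => /(sigz_inj hsig1 hsig2) h.
by rewrite h eqxx in hdb.
Qed.

Lemma center_easy z : (forall r, z * r = r * z) -> sigma z = z ->
  forall y, io z * y = y * io z.
Proof.
move=> hz hs y; rewrite (coef_expand y) /L mulr_sumr mulr_suml; apply: eq_bigr => n _.
rewrite mulrA -rmorphM hz -mulrA T_io (sigz_fix hsig1 hsig2 _ hs).
by rewrite mulrA -rmorphM.
Qed.

Lemma J_nonzero : (exists x, Is 1 x /\ x != 0) -> exists j, J j /\ j != 0.
Proof.
move=> [x [hx hx0]]; exists x; split => //.
case: hJ => J0 [JD JM].
apply: (IP_elim (P := J) _ _ _ hx) => //.
move=> w hw; rewrite big_ord1; have [j [hj ->]] := hw 0%N isT; exact: hj.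
Qed.

Lemma center_hard x : is_domain R ->
  (forall kk : int, kk != 0 -> forall a : R, a != 0 ->
      ~ (forall r, r * a = a * sz kk r)) ->
  (exists x, Is 1 x /\ x != 0) ->
  B x -> (forall y, B y -> x * y = y * x) ->
  exists z, (forall r, z * r = r * z) /\ sigma z = z /\ x = io z.
Proof.
move=> [R1 hR] hk hI1 hx hc.
have hio : forall r, B (io r).
  move=> r; apply: (Bn_B (n := 0)); exists r; split => //; by rewrite /= expr0 mulr1.
have hn : forall n, n != 0 -> coef x n = 0.
  move=> n hn; apply/eqP; apply: NNPP => ha; apply: (hk n hn _ (introT negP ha)) => r.
  by rewrite -coef_mulL -coef_mulR hc.
set z := coef x 0.
have hxz : x = io z.
  apply: coef_eq => n; rewrite -[io z]mulr1 -[1]/(T 0) coef_mono.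
  by case: eqP => [->//|/eqP]; apply: hn.
have hzc : forall r, z * r = r * z.
  by move=> r; have := hc _ (hio r); rewrite hxz -!rmorphM => /io_inj.
exists z; split => //; split => //.
have [j [hj hj0]] := J_nonzero hI1.
have hy : B (io j * t).
  apply: (Bn_B (n := 1)); exists j; split; last by rewrite /= expr1.
  have := IP_single (F := fun i => img (sz (Posz i)) J) (m := 1) (w := fun _ : nat => j).
  rewrite big_ord1; apply => -[|i] // _; by exists j.
have := hc _ hy; rewrite hxz mulrA -rmorphM -mulrA hti mulrA -rmorphM.
move=> /(congr1 (fun s => s * tinv)); rewrite -!mulrA htt !mulr1 => /io_inj.
rewrite hzc => /eqP; rewrite -subr_eq0 -mulrBr => /eqP /hR [h|h].
  by rewrite h eqxx in hj0.
by apply/eqP; rewrite eq_sym -subr_eq0 h.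
Qed.
End Laurent.

Theorem lemma2p1 (k : fieldType) (R : algType k)
  (sigma : {lrmorphism R -> R}) (sigmainv : R -> R)
  (hsig1 : cancel sigma sigmainv) (hsig2 : cancel sigmainv sigma)
  (H J : R -> Prop) (hH : two_sided_ideal H) (hJ : two_sided_ideal J)
  (hI : forall n : int, exists x, Iseq sigma sigmainv H J n x /\ x != 0)
  (S : algType k) (iota : {lrmorphism R -> S}) (t tinv : S)
  (hS : is_skew_laurent sigma iota t tinv) :
  let B := BR sigma sigmainv H J iota t tinv in
  let Bn := BRdeg sigma sigmainv H J iota t tinv in
  (* (1) B is a Z-graded subalgebra of S with B_n = I^(n) t^n *)
  (is_subalg B /\
   (forall n x, Bn n x -> B x) /\
   (forall (n : int) (r : R), B (iota r * tpow t tinv n) -> Bn n (iota r * tpow t tinv n)) /\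
   (forall m n x y, Bn m x -> Bn n y -> Bn (m + n) (x * y)) /\
   (forall x, B x -> exists (m : nat) (b : int -> S),
       (forall n, Bn n (b n)) /\ x = \sum_(i < (m.*2).+1) b (i%:Z - m%:Z)) /\
   (forall (m : nat) (b : int -> S), (forall n, Bn n (b n)) ->
       \sum_(i < (m.*2).+1) b (i%:Z - m%:Z) = 0 ->
       forall n : int, (`|n| <= m)%N -> b n = 0)) /\
  (* (2) generators R, Jt, sigma^-1(H) t^-1 *)
  (forall x, B x <->
     gen_subalg (fun g => (exists r, g = iota r) \/
                          (exists j, J j /\ g = iota j * t) \/
                          (exists h, H h /\ g = iota (sigmainv h) * tinv)) x) /\
  (* (3) *)
  (is_domain R <-> is_domain_on B) /\
  (* (4) center *)
  (is_domain R ->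
   (forall m : nat, (0 < m)%N -> exists r, iter m sigma r != r) ->
   (forall kk : int, kk != 0 -> forall a : R, a != 0 ->
      ~ (forall r, r * a = a * sigz sigma sigmainv kk r)) ->
   forall x, (B x /\ forall y, B y -> x * y = y * x) <->
     exists z, (forall r, z * r = r * z) /\ sigma z = z /\ x = iota z).
Proof.
move=> B Bn.
have hB := B_subalg hsig1 hsig2 hS hH hJ.
split.
  split; first exact: hB.
  split; first by move=> n x; exact: (Bn_B hS).
  split; first by move=> n r; exact: (Bn_of hS).
  split; first by move=> m n x y; exact: (Bn_mul hsig1 hsig2 hS hH hJ).
  split; first by move=> x; exact: (B_decomp hS).
  by move=> m b; exact: (Bn_uniq hS).
split; first by move=> x; exact: (gen_B hsig1 hsig2 hS hH hJ).
split.
  split.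
    move=> hR; split; first exact: oner_neq0.
    move=> a b _ _; exact: (S_domain hsig1 hsig2 hS hR).
  move=> [h1 hd]; split; first exact: oner_neq0.
  move=> a b hab.
  have hio : forall r, B (iota r).
    move=> r; apply: (Bn_B hS (n := 0)); exists r; split => //; by rewrite /= expr0 mulr1.
  have := hd _ _ (hio a) (hio b); rewrite -rmorphM hab rmorph0 => /(_ erefl) [h|h].
    by left; apply: (io_inj hS); rewrite h rmorph0.
  by right; apply: (io_inj hS); rewrite h rmorph0.
move=> hR _ hk x; split.
  move=> [hx hc]; exact: (center_hard hsig1 hsig2 hS hJ hR hk (hI 1) hx hc).
move=> [z [hz [hs ->]]]; split.
  apply: (Bn_B hS (n := 0)); exists z; split => //; by rewrite /= expr0 mulr1.
by move=> y _; apply: (center_easy hsig1 hsig2 hS).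
Qed.
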